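(* Let $\rho:\omega_1\setminus\{0\}\to\omega_1$ be the generic regressive map and let $A\subseteq\omega_1$ be countable and $\rho$-closed. Then there exist ordinals $\beta,\gamma<\omega_1$ with $\beta,\gamma\notin A$, $\beta\neq\gamma$, $\gamma\notin\operatorname{Succ}_\rho(\beta)$, and $\operatorname{Succ}_\rho(\beta)\cap A=\varnothing$.
   Context: $\mathbb P_0$ is the forcing of finite partial regressive functions on $\omega_1$ (finite partial $p:\omega_1\setminus\{0\}\to\omega_1$ with $p(\alpha)<\alpha$); for a $V$-generic $G_0$, $\rho$ is the induced total regressive map $\omega_1\setminus\{0\}\to\omega_1$. $\operatorname{Succ}_\rho(\xi)=\{\eta<\omega_1:\rho(\eta)=\xi\}$. $A$ is $\rho$-closed if $\rho(\eta)\in A$ whenever $0\neq\eta\in A$. *)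

(* Defs.v *)
From Stdlib Require Import Classical.

Set Implicit Arguments.

Definition countable_set (T : Type) (A : T -> Prop) : Prop :=
  exists f : T -> nat, forall x y, A x -> A y -> f x = f y -> x = y.

(* (T, lt, z) is (isomorphic to) omega_1 with least element z = 0:
   a strict well-order, total, uncountable, all of whose proper
   initial segments are countable. *)
Record is_omega1 (T : Type) (lt : T -> T -> Prop) (z : T) : Prop := {
  om_irrefl : forall x, ~ lt x x;
  om_trans : forall x y w, lt x y -> lt y w -> lt x w;
  om_total : forall x y, lt x y \/ x = y \/ lt y x;
  om_wf : well_founded lt;
  om_zero : forall x, ~ lt x z;
  om_uncountable : ~ countable_set (fun _ : T => True);
  om_segments : forall a, countable_set (fun x => lt x a)
}.

(* rho : omega_1 \ {0} -> omega_1 regressive (value at 0 is irrelevant). *)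
Definition regressive (T : Type) (lt : T -> T -> Prop) (z : T) (rho : T -> T) :=
  forall a, a <> z -> lt (rho a) a.

Definition Succ (T : Type) (z : T) (rho : T -> T) (xi : T) : T -> Prop :=
  fun eta => eta <> z /\ rho eta = xi.

Definition rho_closed (T : Type) (z : T) (rho : T -> T) (A : T -> Prop) : Prop :=
  forall eta, eta <> z -> A eta -> A (rho eta).

(* Main.v *)
Require Import Defs.
From Stdlib Require Import Classical ClassicalEpsilon Lia.

Lemma cunion (T : Type) (P Q : T -> Prop) :
  countable_set P -> countable_set Q -> countable_set (fun x => P x \/ Q x).
Proof.
  intros [f Hf] [g Hg].
  exists (fun x => if excluded_middle_informative (P x) then 2 * f x else 2 * g x + 1).
  intros x y Hx Hy.
  destruct (excluded_middle_informative (P x)) as [px|px];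
  destruct (excluded_middle_informative (P y)) as [py|py]; intro E.
  - apply Hf; auto; lia.
  - lia.
  - lia.
  - apply Hg; [destruct Hx; tauto | destruct Hy; tauto | lia].
Qed.

Lemma cnot (T : Type) (lt : T -> T -> Prop) (z : T) (Hom : is_omega1 lt z) (P : T -> Prop) :
  countable_set P -> exists x, ~ P x.
Proof.
  intros [f Hf]. apply NNPP; intro H.
  apply (om_uncountable Hom). exists f. intros x y _ _.
  apply Hf; apply NNPP; intro N; apply H; eauto.
Qed.

Theorem lemma2p6 (T : Type) (lt : T -> T -> Prop) (z : T)
  (Hom : is_omega1 lt z) (rho : T -> T) (Hreg : regressive lt z rho)
  (A : T -> Prop) (HAc : countable_set A) (HAcl : rho_closed z rho A) :
  exists beta gamma : T,
    ~ A beta /\ ~ A gamma /\ beta <> gamma /\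
    ~ Succ z rho beta gamma /\
    (forall eta, Succ z rho beta eta -> ~ A eta).
Proof.
  destruct (@cnot T lt z Hom A HAc) as [gamma Hg].
  assert (C : countable_set (fun x => A x \/ (lt x gamma \/ x = gamma))).
  { apply cunion; [exact HAc|]. apply cunion; [apply (om_segments Hom)|].
    exists (fun _ => 0). intros x y -> -> _; reflexivity. }
  destruct (@cnot T lt z Hom _ C) as [beta Hb].
  assert (Lgb : lt gamma beta).
  { destruct (om_total Hom gamma beta) as [h|[h|h]]; auto; exfalso; apply Hb; auto. }
  exists beta, gamma. split; [tauto|]. split; [exact Hg|]. split; [intro E; apply Hb; auto|].
  split.
  - intros [hz hr]. pose proof (Hreg gamma hz) as L. rewrite hr in L.
    exact (om_irrefl Hom gamma (om_trans Hom _ _ _ Lgb L)).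
  - intros eta [hz hr] Ha. apply Hb. left. rewrite <- hr. apply HAcl; auto.
Qed.
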